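(* Let $n$ be a positive integer and put $\overline n=2\operatorname{lcm}(1,2,\dots,n)$. Let $M_{\overline n}$ be the least positive integer $M$ such that the set $\pi_{\overline n,M}$ is infinite, and put $\pi_{\overline n}=\pi_{\overline n,M_{\overline n}}$. Let $r\in\pi_{\overline n}$, and let $G_{n,r}$ be constructed as follows: $R_{n,r}$ is an extraspecial group of order $r^{2n+1}$ and exponent $r$; $A_{n,r}\leqslant\operatorname{Aut}(R_{n,r})$ is a subgroup isomorphic to $Sp_{2n}(r)$ centralizing $Z(R_{n,r})$; $X_{n,r}=R_{n,r}A_{n,r}$ is the natural semidirect product; $p$ is a prime with $p\equiv1\pmod r$; $V_{n,r}$ is a faithful irreducible $\mathbb{F}_pX_{n,r}$-module of dimension $r^n$; and $G_{n,r}=V_{n,r}X_{n,r}$ is the natural semidirect product. Then the $c$-dimension of $G_{n,r}$ does not exceed $2\left((n+1)^2+nM_{\overline n}\right)$.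
   Context: For a positive integer $m$, $\Omega(m)$ is the number of prime divisors of $m$ counted with multiplicity. For positive integers $n,M$, $\pi_{n,M}=\{r\mid r\text{ is an odd prime and }\Omega(r^n-1)\leqslant M\}$; it is known that for each $n$ some $\pi_{n,M}$ is infinite, so $M_{\overline n}$ is well defined. The $c$-dimension of a group $G$ is the maximal length $k$ of a chain of nested centralizers $C_G(Y_0)<C_G(Y_1)<\dots<C_G(Y_k)$ (strict inclusions) of subsets $Y_i\subseteq G$. *)

(* Defs.v *)
From mathcomp Require Import all_boot all_order all_algebra all_fingroup all_solvable.
Set Implicit Arguments. Unset Strict Implicit. Unset Printing Implicit Defensive.
Import GRing.Theory.

Definition Omega (m : nat) : nat := \sum_(q <- primes m) logn q m.

Definition pi_set (N M : nat) : pred nat :=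
  fun r => [&& odd r, prime r & Omega (r ^ N - 1) <= M].

Definition infinite_pred (P : pred nat) : Prop :=
  forall b : nat, exists r, b < r /\ P r.

Definition nbar (n : nat) : nat := 2 * \big[lcmn/1]_(1 <= i < n.+1) i.

Definition is_M_bar (N M : nat) : Prop :=
  0 < M /\ infinite_pred (pi_set N M) /\
  (forall M', 0 < M' < M -> ~ infinite_pred (pi_set N M')).

(* standard alternating form J = [[0, I_n], [-I_n, 0]] over F_r,
   as a (2n) x (2n) matrix (size written (2*n).-1.+1 as required by 'GL). *)
Definition sympJ (n r : nat) : 'M['F_r]_((2 * n).-1.+1) :=
  \matrix_(i, j) (if (i < n) && (j == i + n :> nat) then 1%R
                  else if (n <= i) && (i == j + n :> nat) then (-1)%R else 0%R).

Definition Sp (n r : nat) : {set {'GL_(2 * n)['F_r]}} :=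
  [set g : {'GL_(2 * n)['F_r]} |
     ((GLval g) *m sympJ n r *m (GLval g)^T == sympJ n r)%R].

Local Open Scope group_scope.
Definition centralizer_chain (gT : finGroupType) (G : {set gT}) (k : nat)
  (Y : nat -> {set gT}) : Prop :=
  (forall i, i <= k -> Y i \subset G) /\
  (forall i, i < k -> 'C_G(Y i) \proper 'C_G(Y i.+1)).

Definition c_dim_le (gT : finGroupType) (G : {set gT}) (B : nat) : Prop :=
  forall k Y, @centralizer_chain gT G k Y -> k <= B.

(* Main.v *)
Require Import Defs.
From mathcomp Require Import all_boot all_order all_algebra all_fingroup all_solvable.
From mathcomp Require Import zify ring.
Set Implicit Arguments. Unset Strict Implicit. Unset Printing Implicit Defensive.
Section PartA.

Lemma Omega_sub (m : nat) (s : seq nat) : 0 < m -> uniq s -> {subset primes m <= s} ->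
  \sum_(q <- s) logn q m = Omega m.
Proof.
move=> m0 us sub; rewrite /Omega.
rewrite (bigID (fun q => q \in primes m)) /=.
rewrite [X in _ + X]big1 ?addn0; last first.
  by move=> q qn; apply/eqP; rewrite -leqn0 leqNgt logn_gt0.
rewrite -big_filter; apply: perm_big.
apply: uniq_perm; first exact: filter_uniq.
  exact: primes_uniq.
by move=> q; rewrite mem_filter; case: (boolP (q \in primes m)) => // /sub ->.
Qed.

Lemma Omega_mul a b : 0 < a -> 0 < b -> Omega (a * b) = Omega a + Omega b.
Proof.
move=> a0 b0.
have ab0 : 0 < a * b by rewrite muln_gt0 a0.
rewrite -(@Omega_sub a (primes (a*b))) //; last 2 first.
- exact: primes_uniq.
- by move=> q; rewrite primesM // => ->.
rewrite -(@Omega_sub b (primes (a*b))) //; last 2 first.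
- exact: primes_uniq.
- by move=> q; rewrite primesM // => ->; rewrite orbT.
rewrite -big_split /=; apply: eq_bigr => q _; exact: lognM.
Qed.

Lemma Omega1 : Omega 1 = 0.
Proof. by rewrite /Omega big_nil. Qed.

Lemma Omega_dvd a b : 0 < b -> a %| b -> Omega a <= Omega b.
Proof.
move=> b0 /dvdnP [c Hc]; subst b.
move: b0; rewrite muln_gt0 => /andP [c0 a0].
by rewrite Omega_mul // leq_addl.
Qed.

Lemma Omega_primeX q k : prime q -> Omega (q ^ k) = k.
Proof.
move=> pq; elim: k => [|k IH]; first by rewrite expn0 Omega1.
rewrite expnS Omega_mul ?expn_gt0 ?prime_gt0 // IH /Omega primes_prime //.
by rewrite big_seq1 logn_prime // eqxx.
Qed.

Lemma Omega_gt0 a : 1 < a -> 0 < Omega a.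
Proof.
move=> a1; rewrite /Omega.
have [q pq qa] := pdivP a1.
have qin : q \in primes a by rewrite mem_primes pq qa ltnW.
rewrite (bigD1_seq q) ?primes_uniq //=.
by apply: leq_trans (leq_addr _ _); rewrite logn_gt0.
Qed.

End PartA.

Section PartB.
Local Open Scope group_scope.

Lemma Omega_subg (gT : finGroupType) (H K : {group gT}) : H \subset K ->
  (Omega #|H| <= Omega #|K|)%N.
Proof. by move=> sHK; apply: Omega_dvd; [exact: cardG_gt0 | exact: cardSg]. Qed.

Lemma Omega_subg_lt (gT : finGroupType) (H K : {group gT}) : H \subset K -> H :!=: K ->
  (Omega #|H| < Omega #|K|)%N.
Proof.
move=> sHK neq; rewrite -(Lagrange sHK) Omega_mul ?cardG_gt0 //.
rewrite -addn1 leq_add2l Omega_gt0 // indexg_gt1.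
by apply: contra neq => sKH; rewrite eqEsubset sHK sKH.
Qed.

Lemma chain_bound (gT : finGroupType) (G V : {group gT}) :
  V <| G -> abelian V -> c_dim_le G (2 * Omega #|G / V|).
Proof.
move=> nVG abV k Y [YG ch].
have sVG := normal_sub nVG.
have nG := normal_norm nVG.
pose C i := 'C_G(Y i)%G.
pose D i := 'C_G(C i)%G.
pose a i := Omega #|(C i / V)%G|.
pose b i := Omega #|(D i / V)%G|.
have CG i : C i \subset G by exact: subsetIl.
have DG i : D i \subset G by exact: subsetIl.
have sC i : (i < k)%N -> C i \subset C i.+1.
  by move=> ik; have := ch i ik; rewrite properE => /andP [].
have sD i : (i < k)%N -> D i.+1 \subset D i.
  by move=> ik; rewrite /D; apply: setIS; apply: centS; exact: sC.
have aB i : (a i <= Omega #|(G / V)%G|)%N by apply: Omega_subg; apply: quotientS.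
have step i : (i < k)%N -> (a i + b i.+1 < a i.+1 + b i)%N.
  move=> ik.
  have ha : (a i <= a i.+1)%N by apply: Omega_subg; apply: quotientS; exact: sC.
  have hb : (b i.+1 <= b i)%N by apply: Omega_subg; apply: quotientS; exact: sD.
  case: (eqVneq (C i / V) (C i.+1 / V)) => [eC|nC]; last first.
    have : (a i < a i.+1)%N.
      by apply: Omega_subg_lt => //; apply: quotientS; exact: sC.
    move=> lt; rewrite -addSn; exact: leq_add.
  case: (eqVneq (D i.+1 / V) (D i / V)) => [eD|nD]; last first.
    have : (b i.+1 < b i)%N.
      by apply: Omega_subg_lt => //; apply: quotientS; exact: sD.
    move=> lt; rewrite -addnS; exact: leq_add.
  exfalso.
  have eI : C i.+1 :&: V = C i :&: V.
    apply/eqP; rewrite eqEsubset [X in _ && X]setSI ?sC // andbT.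
    apply/subsetP => v /setIP [vC vV]; rewrite inE vV andbT.
    rewrite /C inE (subsetP sVG _ vV) /=; apply/centP => y yY.
    have yD : y \in D i.
      rewrite inE (subsetP (YG i (ltnW ik)) _ yY) /=; apply/centP => c /setIP [_ cY].
      by move/centP: cY => /(_ y yY).
    have : y \in coset V @*^-1 (D i.+1 / V).
      rewrite eD quotientK ?(subset_trans (DG i)) //.
      by rewrite -[y]mul1g mem_mulg.
    rewrite quotientK ?(subset_trans (DG i.+1)) // => /mulsgP [w d wV dD ->].
    apply: commuteM.
      by move/centsP: abV => /(_ v vV w wV).
    move: dD => /setIP [_ /centP dc].
    by apply: commute_sym; apply: dc.
  have cardC j : #|C j| = (#|C j :&: V| * #|C j / V|)%N.
    rewrite card_quotient ?(subset_trans (CG j)) // -indexgI.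
    by rewrite Lagrange // subsetIl.
  have := ch i ik; rewrite properEcard => /andP [_].
  by rewrite !cardC eI eC ltnn.
have ind i : (i <= k)%N -> (a 0 + b i + i <= a i + b 0)%N.
  elim: i => [|i IH] ik; first by rewrite !addn0.
  have := step i ik; have := IH (ltnW ik); lia.
have h := ind k (leqnn k).
apply: leq_trans (leq_addl (a 0 + b k) k) _; apply: leq_trans h _.
rewrite mul2n -addnn; apply: leq_add; first exact: aB.
by apply: Omega_subg; apply: quotientS.
Qed.

End PartB.

Section PartC.
Import GRing.Theory.
Local Open Scope ring_scope.

Notation vec n r := 'rV['F_r]_((2*n).-1.+1).
Notation mat n r := 'M['F_r]_((2*n).-1.+1).
Definition om (n r : nat) (x y : 'rV['F_r]_((2*n).-1.+1)) : 'F_r :=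
  \sum_i \sum_k x 0 i * sympJ n r i k * y 0 k.

Lemma J_anti n r (n0 : (0 < n)%N) (i k : 'I_((2*n).-1.+1)) : sympJ n r k i = - sympJ n r i k.
Proof.
rewrite !mxE.
case: (ltnP i n) => hi; case: (ltnP k n) => hk;
  case: (eqVneq (k : nat) (i + n)%N) => e1; case: (eqVneq (i : nat) (k + n)%N) => e2 /=;
  rewrite ?opprK ?oppr0 //; have := ltn_ord i; have := ltn_ord k; lia.
Qed.

Lemma om_anti n r (n0 : (0 < n)%N) (x y : vec n r) : om y x = - om x y.
Proof.
rewrite /om exchange_big /= -sumrN; apply: eq_bigr => i _.
rewrite -sumrN; apply: eq_bigr => k _.
rewrite J_anti //; ring.
Qed.

Lemma om_linr n r (x y z : vec n r) (c : 'F_r) : om x (y + c *: z) = om x y + c * om x z.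
Proof.
rewrite /om mulr_sumr -big_split; apply: eq_bigr => i _.
rewrite mulr_sumr -big_split; apply: eq_bigr => k _.
have -> : (y + c *: z) 0 k = y 0 k + c * z 0 k by rewrite !mxE.
by rewrite mulrDr; congr (_ + _); rewrite mulrCA mulrA. 
Qed.

Lemma two_neq0 r : prime r -> odd r -> (2%:R : 'F_r) != 0.
Proof.
move=> pr odr; rewrite -(dvdn_pcharf (pchar_Fp pr)).
apply/negP => /(dvdn_leq (isT : (0 < 2)%N)) le2.
have := prime_gt1 pr; move: odr le2; case: r {pr} => [|[|[|]]] //.
Qed.

Lemma om_alt n r (n0 : (0 < n)%N) (pr : prime r) (odr : odd r) (x : vec n r) : om x x = 0.
Proof.
have h := om_anti n0 x x.
have : om x x * 2%:R = 0 by rewrite mulr_natr mulr2n {1}h addNr.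
by move/eqP; rewrite mulf_eq0 (negbTE (two_neq0 pr odr)) orbF => /eqP.
Qed.

Lemma om_delta n r (x : vec n r) (c : 'I_((2*n).-1.+1)) :
  om x (delta_mx 0 c) = \sum_a x 0 a * sympJ n r a c.
Proof.
rewrite /om; apply: eq_bigr => a _.
rewrite (bigD1 c) //= big1 ?addr0; first by rewrite [X in _ * X]mxE !eqxx mulr1.
by move=> k kc; rewrite [X in _ * X]mxE eqxx /= (negbTE kc) mulr0.
Qed.

Lemma om_nondeg n r (n0 : (0 < n)%N) (x : vec n r) : x != 0 -> exists y, om x y != 0.
Proof.
move=> x0.
have [i xi] : exists i, x 0 i != 0.
  apply/existsP; apply: contraR x0 => /existsPn h; apply/eqP/rowP => i.
  by rewrite mxE; apply/eqP; move: (h i); rewrite negbK.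
pose c : 'I_((2*n).-1.+1) := inord (if (i < n)%N then (i + n)%N else (i - n)%N).
have hi := ltn_ord i.
have hc : (c : nat) = if (i < n)%N then (i + n)%N else (i - n)%N.
  rewrite inordK //; case: ifP => hh; lia.
exists (delta_mx 0 c); rewrite om_delta (bigD1 i) //= big1 ?addr0.
  rewrite mulf_eq0 negb_or xi /= mxE.
  case: ifP => [_|h1]; first by rewrite oner_eq0.
  case: ifP => [_|h2]; first by rewrite oppr_eq0 oner_eq0.
  exfalso; case: (ltnP i n) hc h1 h2 => hh hc h1 h2.
    by rewrite hc eqxx in h1.
  by rewrite hc subnK // eqxx in h2.
move=> a ai; rewrite mxE.
have ha := ltn_ord a.
have ai' : (a : nat) != i by [].
case: ifP => [/andP [h1 /eqP h2]|_]; first by exfalso; move: ai'; case: ifP hc => hh hc; lia.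
case: ifP => [/andP [h1 /eqP h2]|_]; last by rewrite mulr0.
by exfalso; move: ai'; case: ifP hc => hh hc; lia.
Qed.

Lemma om_0r n r (x : vec n r) : om x 0 = 0.
Proof. by rewrite /om big1 // => i _; rewrite big1 // => k _; by rewrite [X in _ * X]mxE mulr0. Qed.

Lemma om_scaler n r (x y : vec n r) c : om x (c *: y) = c * om x y.
Proof. by have := om_linr x 0 y c; rewrite add0r om_0r add0r. Qed.

Lemma om_addr n r (x y z : vec n r) : om x (y + z) = om x y + om x z.
Proof. by have := om_linr x y z 1; rewrite scale1r mul1r. Qed.

Lemma om_oppr n r (x y : vec n r) : om x (- y) = - om x y.
Proof. by rewrite -scaleN1r om_scaler mulN1r. Qed.

Lemma fiber n r (S : {set vec n r}) (e s : vec n r) :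
  (forall x y c, x \in S -> y \in S -> x + c *: y \in S) -> s \in S -> om e s = 1 ->
  (forall t, #|[set x in S | om e x == t]| = #|[set x in S | om e x == 0]|) /\
  #|S| = (#|'F_r| * #|[set x in S | om e x == 0%R]|)%N.
Proof.
move=> Scl sS es.
have S0 : 0 \in S by have := Scl s s (-1) sS sS; rewrite scaleN1r addrN.
have fib t : #|[set x in S | om e x == t]| = #|[set x in S | om e x == 0]|.
  have -> : [set x in S | om e x == t] = (fun x => x + t *: s) @: [set x in S | om e x == 0].
    apply/setP => x; apply/idP/imsetP.
      rewrite inE => /andP [xS /eqP ext]; exists (x + (- t) *: s).
        by rewrite inE Scl //= om_linr es ext mulr1 addrN.
      by rewrite -addrA -scalerDl addNr scale0r addr0.
    case=> y; rewrite !inE => /andP [yS /eqP ey] ->.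
    by rewrite Scl //= om_linr ey es mulr1 add0r.
  by apply: card_imset; move=> x y /addIr.
split=> //.
rewrite -sum1_card (partition_big (fun x => om e x) predT) //=.
rewrite (eq_bigr (fun _ => #|[set x in S | om e x == 0]|)).
  by rewrite sum_nat_const.
move=> t _; rewrite -(fib t) -sum1_card; apply: eq_bigl => x; by rewrite inE.
Qed.

Definition Pj (n j a : nat) : bool := (a < j)%N || ((n <= a)%N && (a < n + j)%N).

Definition Good n r j (A : mat n r) : bool :=
  [forall a : 'I_((2*n).-1.+1), forall b : 'I_((2*n).-1.+1), (Pj n j a && Pj n j b) ==>
     (om (row a A) (row b A) == sympJ n r a b)].

Definition Uset n r j (A : mat n r) : {set vec n r} :=
  [set x | [forall a : 'I_((2*n).-1.+1), Pj n j a ==> (om (row a A) x == 0)]].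

Lemma U_cl n r j (A : mat n r) x y c : x \in Uset j A -> y \in Uset j A -> x + c *: y \in Uset j A.
Proof.
rewrite !inE => /forallP hx /forallP hy; apply/forallP => a; apply/implyP => Pa.
by rewrite om_linr (eqP (implyP (hx a) Pa)) (eqP (implyP (hy a) Pa)) mulr0 addr0.
Qed.

Lemma om_linl n r (n0 : (0 < n)%N) (x y z : vec n r) c : om (y + c *: z) x = om y x + c * om z x.
Proof. by rewrite om_anti // om_linr opprD -mulrN -!om_anti. Qed.

Lemma GoodP n r j (A : mat n r) :
  reflect (forall a b : 'I_((2*n).-1.+1), Pj n j a -> Pj n j b -> om (row a A) (row b A) = sympJ n r a b)
          (Good j A).
Proof.
apply: (iffP forallP) => h.
  by move=> a b Pa Pb; move/forallP: (h a) => /(_ b); rewrite Pa Pb => /eqP.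
by move=> a; apply/forallP => b; apply/implyP => /andP [Pa Pb]; rewrite h.
Qed.

Lemma UsetP n r j (A : mat n r) x :
  reflect (forall a : 'I_((2*n).-1.+1), Pj n j a -> om (row a A) x = 0) (x \in Uset j A).
Proof.
rewrite inE; apply: (iffP forallP) => h.
  by move=> a Pa; move: (h a); rewrite Pa => /eqP.
by move=> a; apply/implyP => Pa; rewrite h.
Qed.

Lemma mem_setin (T : finType) (S : {set T}) (P : pred T) x :
  (x \in [set y in S | P y]) = (x \in S) && P x.
Proof. by rewrite inE. Qed.

Section Idx.
Variables (n r j : nat).
Hypothesis jn : (j < n)%N.
Local Notation m := ((2*n).-1.+1).
Definition ej : 'I_m := inord j.
Definition fj : 'I_m := inord (j + n).

Lemma ejE : (ej : nat) = j.
Proof. rewrite inordK //; lia. Qed.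
Lemma fjE : (fj : nat) = (j + n)%N.
Proof. rewrite inordK //; lia. Qed.

Lemma Pj_S (a : 'I_m) : Pj n j.+1 a = [|| Pj n j a, a == ej | a == fj].
Proof.
rewrite /Pj -!val_eqE /= ejE fjE.
have := ltn_ord a.
case: (ltnP a j) => h1; case: (ltnP a n) => h2; case: (eqVneq (a : nat) j) => h3;
 case: (eqVneq (a : nat) (j + n)%N) => h4 /=; try lia.
Qed.

Lemma Pj_ej : Pj n j ej = false.
Proof. rewrite /Pj ejE ltnn /=; apply/negbTE/negP => /andP [h1 h2]; lia. Qed.
Lemma Pj_fj : Pj n j fj = false.
Proof. rewrite /Pj fjE; apply/negbTE/negP => /orP [h|/andP [h1 h2]]; lia. Qed.

Ltac jcase a b :=
  rewrite mxE ?ejE ?fjE; have Ha := ltn_ord a; have Hb := ltn_ord b;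
  case: ifP => H1; [|case: ifP => H2]; rewrite ?oppr_eq0 ?oner_eq0 //; try (exfalso; lia).

Lemma J_Pe (a : 'I_m) : Pj n j a ->
  [/\ sympJ n r a ej = 0, sympJ n r ej a = 0, sympJ n r a fj = 0 & sympJ n r fj a = 0].
Proof.
rewrite /Pj => h; split.
- jcase a ej.
- jcase ej a.
- jcase a fj.
- jcase fj a.
Qed.

Lemma J_ee : sympJ n r ej ej = 0. Proof. jcase ej ej. Qed.
Lemma J_ff : sympJ n r fj fj = 0. Proof. jcase fj fj. Qed.
Lemma J_ef : sympJ n r ej fj = 1. Proof. jcase ej fj. Qed.
Lemma J_fe : sympJ n r fj ej = -1. Proof. jcase fj ej. Qed.
Lemma ej_fj : (ej == fj) = false.
Proof. by apply/negbTE; rewrite -val_eqE /= ejE fjE; apply/eqP; lia. Qed.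

Hypotheses (pr : prime r) (odr : odd r).
Let n0 : (0 < n)%N. Proof. lia. Qed.

Lemma Good_S (A : mat n r) : Good j.+1 A =
  [&& Good j A, row ej A \in Uset j A, row fj A \in Uset j A & om (row ej A) (row fj A) == 1].
Proof.
apply/idP/idP.
  move/GoodP => h.
  have PS (a : 'I_m) : Pj n j a -> Pj n j.+1 a by rewrite Pj_S => ->.
  have Pe : Pj n j.+1 ej by rewrite Pj_S eqxx orbT.
  have Pf : Pj n j.+1 fj by rewrite Pj_S eqxx !orbT.
  apply/and4P; split.
  - by apply/GoodP => a b Pa Pb; apply: h; apply: PS.
  - by apply/UsetP => a Pa; rewrite (h a ej (PS a Pa) Pe); case: (J_Pe Pa).
  - by apply/UsetP => a Pa; rewrite (h a fj (PS a Pa) Pf); case: (J_Pe Pa).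
  - by rewrite h // J_ef.
case/and4P => /GoodP hG /UsetP he /UsetP hf /eqP hef.
apply/GoodP => a b; rewrite !Pj_S.
have hfe : om (row fj A) (row ej A) = -1 by rewrite om_anti // hef.
case/or3P => [Pa|/eqP->|/eqP->]; case/or3P => [Pb|/eqP->|/eqP->].
- exact: hG.
- by rewrite he //; case: (J_Pe Pa).
- by rewrite hf //; case: (J_Pe Pa).
- by rewrite om_anti // he // oppr0; case: (J_Pe Pb).
- by rewrite om_alt // J_ee.
- by rewrite hef J_ef.
- by rewrite om_anti // hf // oppr0; case: (J_Pe Pb).
- by rewrite hfe J_fe.
- by rewrite om_alt // J_ff.
Qed.

Lemma U_step (A : mat n r) : Good j.+1 A ->
  Uset j.+1 A = [set x in [set x in Uset j A | om (row fj A) x == 0] | om (row ej A) x == 0].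
Proof.
move=> _; apply/setP => x; apply/UsetP/idP.
  move=> h; rewrite !mem_setin; apply/andP; split; [apply/andP; split|].
  - by apply/UsetP => a Pa; apply: h; rewrite Pj_S Pa.
  - by rewrite h // Pj_S eqxx !orbT.
  - by rewrite h // Pj_S eqxx orbT.
rewrite !mem_setin => /andP [/andP [/UsetP hU /eqP hf] /eqP he] a; rewrite Pj_S.
by case/or3P => [Pa|/eqP->|/eqP->] //; apply: hU.
Qed.
End Idx.

Lemma card_F r : prime r -> #|'F_r| = r.
Proof. by move=> pr; rewrite card_Fp. Qed.

Lemma Good_S_Good n r j (A : mat n r) : prime r -> odd r -> (j < n)%N -> Good j.+1 A -> Good j A.
Proof. by move=> pr odr jn; rewrite Good_S // => /and4P []. Qed.

Lemma Uset0 n r (A : mat n r) : Uset 0 A = setT.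
Proof.
apply/setP => x; rewrite inE in_setT; apply/forallP => a.
by rewrite /Pj ltn0 /= addn0; case: leqP.
Qed.

Lemma cl_sub n r (S : {set vec n r}) (e : vec n r) :
  (forall x y c, x \in S -> y \in S -> x + c *: y \in S) ->
  (forall x y c, x \in [set x in S | om e x == 0] -> y \in [set x in S | om e x == 0] ->
     x + c *: y \in [set x in S | om e x == 0]).
Proof.
move=> cl x y c; rewrite !mem_setin => /andP [xS /eqP ex] /andP [yS /eqP ey].
by rewrite cl //= om_linr ex ey mulr0 addr0.
Qed.

Lemma U_card n r (n0 : (0 < n)%N) (pr : prime r) (odr : odd r) j : (j <= n)%N -> forall A : mat n r, Good j A ->
  #|Uset j A| = (r ^ (2 * n - 2 * j))%N.
Proof.
elim: j => [|j IH] jn A GA.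
  rewrite Uset0 cardsT card_mx card_F // mul1n subn0.
  by rewrite prednK // muln_gt0.
have jn' : (j < n)%N by lia.
have GA' := Good_S_Good pr odr jn' GA.
have := IH (ltnW jn') A GA'.
rewrite (U_step jn' GA).
move: GA; rewrite Good_S // => /and4P [_ eU fU /eqP ef].
set e := row (ej n j) A; set f := row (fj n j) A.
have fe : om f e = -1 by rewrite om_anti // ef.
have mU : - e \in Uset j A.
  by apply/UsetP => a Pa; rewrite om_oppr; move/UsetP: eU => -> //; rewrite oppr0.
have fme : om f (- e) = 1 by rewrite om_oppr fe opprK.
have [_ h1] := @fiber n r (Uset j A) f (- e) (fun x y c => @U_cl n r j A x y c) mU fme.
have fU' : f \in [set x in Uset j A | om f x == 0] by rewrite mem_setin fU /= om_alt.
have [_ h2] := @fiber n r [set x in Uset j A | om f x == 0] e f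
  (cl_sub (fun x y c => @U_cl n r j A x y c)) fU' ef.
rewrite h1 h2 card_F // => H.
have E : (2 * n - 2 * j = (2 * n - 2 * j.+1).+2)%N by lia.
have r0 : (0 < r * r)%N by rewrite muln_gt0 prime_gt0.
move: H; rewrite E !expnS mulnA [in RHS]mulnA => /eqP; rewrite eqn_pmul2l // => /eqP.
by [].
Qed.

Lemma U_proj n r (n0 : (0 < n)%N) (pr : prime r) (odr : odd r) j : (j <= n)%N ->
  forall A : mat n r, Good j A -> forall y : vec n r,
  exists2 u, u \in Uset j A & forall z, z \in Uset j A -> om z u = om z y.
Proof.
elim: j => [|j IH] jn A GA y.
  by exists y; rewrite ?Uset0 ?in_setT.
have jn' : (j < n)%N by lia.
have GA' := Good_S_Good pr odr jn' GA.
have [u' u'U hu'] := IH (ltnW jn') A GA' y.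
rewrite (U_step jn' GA).
move: GA; rewrite Good_S // => /and4P [_ eU fU /eqP ef].
set e := row (ej n j) A; set f := row (fj n j) A.
have fe : om f e = -1 by rewrite om_anti // ef.
exists ((u' + (- om e u') *: f) + (om f u') *: e).
  rewrite !mem_setin U_cl ?U_cl //= !om_linr fe !(om_alt n0 pr odr) ef.
  by rewrite !mulr0 !addr0 mulrN1 mulr1 !addrN eqxx.
move=> z; rewrite !mem_setin => /andP [/andP [zU /eqP fz] /eqP ez].
have fz' : om z f = 0 by rewrite om_anti // fz oppr0.
have ez' : om z e = 0 by rewrite om_anti // ez oppr0.
by rewrite !om_linr fz' ez' !mulr0 !addr0; apply: hu'.
Qed.

Definition Epairs n r j (A : mat n r) : {set vec n r * vec n r} :=
  [set p | [&& p.1 \in Uset j A, p.2 \in Uset j A & om p.1 p.2 == 1]].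

Lemma inEpairs n r j (A : mat n r) p :
  (p \in Epairs j A) = [&& p.1 \in Uset j A, p.2 \in Uset j A & om p.1 p.2 == 1].
Proof. by rewrite inE. Qed.

Lemma E_card n r (n0 : (0 < n)%N) (pr : prime r) (odr : odd r) j (jn : (j < n)%N)
  (A : mat n r) : Good j A ->
  #|Epairs j A| = ((r ^ (2 * n - 2 * j) - 1) * r ^ (2 * n - 2 * j).-1)%N.
Proof.
move=> GA.
set U := Uset j A.
have cU := U_card n0 pr odr (ltnW jn) GA.
have U0 : (0 : vec n r) \in U.
  by apply/UsetP => a _; rewrite om_0r.
pose g (e : vec n r) := #|[set f in U | om e f == 1]|.
have hE : #|Epairs j A| = (\sum_(e in U) g e)%N.
  rewrite -sum1_card (partition_big (fun p => p.1) (mem U)) /=; last first.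
    by move=> p; rewrite inEpairs => /and3P [].
  apply: eq_bigr => e eU.
  have inj : injective (pair e : vec n r -> vec n r * vec n r).
    by move=> x y [].
  rewrite /g -(card_imset _ inj) -sum1_card; apply: eq_bigl => p.
  apply/andP/imsetP.
    move=> [pE /eqP pe]; exists p.2; last by rewrite -pe; case: (p).
    by move: pE; rewrite inEpairs mem_setin pe => /and3P [_ -> ->].
  case=> f; rewrite mem_setin => /andP [fU ef] -> /=; split => //.
  by rewrite inEpairs /= eU fU ef.
have g0 : g 0 = 0%N.
  apply/eqP; rewrite cards_eq0; apply/eqP/setP => f; rewrite !inE.
  by rewrite om_anti // om_0r oppr0 eq_sym oner_eq0 andbF.
have gne e : e \in U -> e != 0 -> g e = (r ^ (2 * n - 2 * j).-1)%N.
  move=> eU e0.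
  have [y ey] := om_nondeg n0 e0.
  have [u uU hu] := U_proj n0 pr odr (ltnW jn) GA y.
  have eu : om e u = om e y by apply: hu.
  have sU : (om e y)^-1 *: u \in U by rewrite -[_ *: u]add0r U_cl.
  have es : om e ((om e y)^-1 *: u) = 1 by rewrite om_scaler eu mulVf.
  have [fib cS] := fiber (fun x y c => @U_cl n r j A x y c) sU es.
  rewrite /g fib.
  move: cS; rewrite cU card_F //.
  have -> : (2 * n - 2 * j = (2 * n - 2 * j).-1.+1)%N by lia.
  rewrite expnS => /eqP; rewrite eqn_pmul2l ?prime_gt0 // => /eqP <-.
  by [].
rewrite hE (big_setD1 0) //= g0 add0n.
rewrite (eq_bigr (fun _ => r ^ (2 * n - 2 * j).-1))%N; last first.
  by move=> e; rewrite in_setD1 => /andP [e0 eU]; apply: gne.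
rewrite (@sum_nat_const _ (mem (U :\ 0))); congr (_ * _)%N.
by rewrite -cU (cardsD1 0 U) U0 add1n subn1.
Qed.

Definition Tset n r j : {set mat n r} :=
  [set A | Good j A && [forall a : 'I_((2*n).-1.+1), ~~ Pj n j a ==> (row a A == 0)]].

Lemma inTset n r j (A : mat n r) :
  (A \in Tset n r j) = Good j A && [forall a : 'I_((2*n).-1.+1), ~~ Pj n j a ==> (row a A == 0)].
Proof. by rewrite inE. Qed.

Definition insm n r j (B : mat n r) (e f : vec n r) : mat n r :=
  \matrix_(i, k) (if i == ej n j then e 0 k else if i == fj n j then f 0 k else B i k).
Definition trm n r j (A : mat n r) : mat n r :=
  \matrix_(i, k) (if (i == ej n j) || (i == fj n j) then 0 else A i k).

Lemma row_ins n r j (B : mat n r) e f a :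
  row a (insm j B e f) = if a == ej n j then e else if a == fj n j then f else row a B.
Proof.
apply/rowP => k; rewrite !mxE.
by case: ifP => _; [|case: ifP => _]; rewrite ?mxE // ord1.
Qed.

Lemma row_tr n r j (A : mat n r) a :
  row a (trm j A) = if (a == ej n j) || (a == fj n j) then 0 else row a A.
Proof.
by apply/rowP => k; rewrite !mxE; case: ifP => _; rewrite ?mxE.
Qed.

Lemma Good_eq n r j (A B : mat n r) : (forall a : 'I_((2*n).-1.+1), Pj n j a -> row a A = row a B) ->
  Good j A = Good j B.
Proof.
move=> h; apply/GoodP/GoodP => H a b Pa Pb; rewrite -H //.
  by rewrite !h.
by rewrite -!h.
Qed.

Lemma Uset_eq n r j (A B : mat n r) : (forall a : 'I_((2*n).-1.+1), Pj n j a -> row a A = row a B) ->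
  Uset j A = Uset j B.
Proof.
move=> h; apply/setP => x; apply/UsetP/UsetP => H a Pa.
  by rewrite -h //; apply: H.
by rewrite h //; apply: H.
Qed.

Lemma Pj_ne n j (jn : (j < n)%N) (a : 'I_((2*n).-1.+1)) : Pj n j a -> (a == ej n j) = false /\ (a == fj n j) = false.
Proof.
move=> Pa; split; apply/negbTE; apply: contraTN Pa => /eqP ->.
  by rewrite Pj_ej.
by rewrite Pj_fj.
Qed.

Lemma T_rec n r (n0 : (0 < n)%N) (pr : prime r) (odr : odd r) j (jn : (j < n)%N) :
  #|Tset n r j.+1| = (#|Tset n r j| * ((r ^ (2 * n - 2 * j) - 1) * r ^ (2 * n - 2 * j).-1))%N.
Proof.
set c := ((r ^ (2 * n - 2 * j) - 1) * r ^ (2 * n - 2 * j).-1)%N.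
pose Sg := [set q : mat n r * (vec n r * vec n r) | (q.1 \in Tset n r j) && (q.2 \in Epairs j q.1)].
pose F (q : mat n r * (vec n r * vec n r)) := insm j q.1 q.2.1 q.2.2.
have fe : (fj n j == ej n j) = false by rewrite eq_sym ej_fj.
have inSg q : (q \in Sg) = (q.1 \in Tset n r j) && (q.2 \in Epairs j q.1) by rewrite inE.
have cS : #|Sg| = (#|Tset n r j| * c)%N.
  rewrite -sum1_card (partition_big (fun q => q.1) (mem (Tset n r j))) /=; last first.
    by move=> q; rewrite inSg => /andP [].
  rewrite -(@sum_nat_const _ (mem (Tset n r j))); apply: eq_bigr => B BT.
  move: (BT); rewrite inTset => /andP [GB _].
  rewrite /c -(E_card n0 pr odr jn GB).
  have inj : injective (pair B : vec n r * vec n r -> mat n r * (vec n r * vec n r)).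
    by move=> x y [].
  rewrite -(card_imset _ inj) -sum1_card; apply: eq_bigl => q.
  apply/andP/imsetP.
    move=> [qS /eqP qe]; exists q.2; last by rewrite -qe; case: (q).
    by move: qS; rewrite inSg qe => /andP [_].
  by case=> p pE -> /=; split => //; rewrite inSg /= BT pE.
have inj : {in Sg &, injective F}.
  move=> [B [e f]] [B' [e' f']]; rewrite !inSg /= => /andP [BT _] /andP [B'T _] eqF.
  have := congr1 (row (ej n j)) eqF; rewrite /F /= !row_ins eqxx => ee.
  have := congr1 (row (fj n j)) eqF; rewrite /F /= !row_ins fe eqxx => ff.
  subst e' f'; congr (_, (_, _)).
  apply/row_matrixP => a.
  move: BT B'T; rewrite !inTset => /andP [_ /forallP zB] /andP [_ /forallP zB'].
  case: (eqVneq a (ej n j)) => [->|ae].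
    by rewrite (eqP (implyP (zB _) _)) ?(eqP (implyP (zB' _) _)) ?Pj_ej.
  case: (eqVneq a (fj n j)) => [->|af].
    by rewrite (eqP (implyP (zB _) _)) ?(eqP (implyP (zB' _) _)) ?Pj_fj.
  have := congr1 (row a) eqF; rewrite /F /= !row_ins (negbTE ae) (negbTE af).
  by [].
have img : F @: Sg = Tset n r j.+1.
  apply/setP => A; apply/imsetP/idP.
    case=> [[B [e f]]]; rewrite inSg /= => /andP [BT]; rewrite inEpairs /= => /and3P [eU fU ef] ->.
    move: BT; rewrite inTset => /andP [GB /forallP zB].
    have rq : forall a : 'I_((2*n).-1.+1), Pj n j a -> row a (F (B, (e, f))) = row a B.
      by move=> a Pa; rewrite /F /= row_ins; case: (Pj_ne jn Pa) => -> ->.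
    rewrite inTset Good_S // (Good_eq rq) GB (Uset_eq rq) /F /= !row_ins eqxx fe eqxx eU fU ef /=.
    apply/forallP => a; apply/implyP; rewrite Pj_S // => /norP [nPa /norP [ae af]].
    by rewrite row_ins (negbTE ae) (negbTE af); apply: (implyP (zB a)).
  rewrite inTset => /andP [GA /forallP zA].
  have rq : forall a : 'I_((2*n).-1.+1), Pj n j a -> row a (trm j A) = row a A.
    by move=> a Pa; rewrite row_tr; case: (Pj_ne jn Pa) => -> ->.
  move: (GA); rewrite Good_S // => /and4P [GA' eU fU ef].
  exists (trm j A, (row (ej n j) A, row (fj n j) A)).
    rewrite inSg /= inTset (Good_eq rq) GA' inEpairs /= (Uset_eq rq) eU fU ef !andbT.
    apply/forallP => a; apply/implyP => nPa; rewrite row_tr.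
    case: ifP => // /negbT; rewrite negb_or => /andP [ae af].
    apply: (implyP (zA a)); rewrite Pj_S // negb_or nPa /=; exact/norP.
  apply/row_matrixP => a; rewrite /F /= row_ins row_tr.
  case: (eqVneq a (ej n j)) => [->|ae] //.
  case: (eqVneq a (fj n j)) => [->|af] //.
by rewrite -img card_in_imset // cS.
Qed.

Lemma om_mx n r (x y : vec n r) : om x y = (x *m sympJ n r *m y^T) 0 0.
Proof.
rewrite /om mxE exchange_big /=; apply: eq_bigr => k _.
rewrite !mxE mulr_suml; apply: eq_bigr => i _; by rewrite !mxE.
Qed.

Lemma mx_entry n r (A : mat n r) a b :
  (A *m sympJ n r *m A^T) a b = om (row a A) (row b A).
Proof.
rewrite /om mxE exchange_big /=; apply: eq_bigr => k _.
rewrite !mxE mulr_suml; apply: eq_bigr => i _; by rewrite !mxE.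
Qed.

Lemma Sp_unit n r (n0 : (0 < n)%N) (A : mat n r) :
  A *m sympJ n r *m A^T = sympJ n r -> A \in unitmx.
Proof.
move=> h; rewrite -row_free_unit -kermx_eq0.
case: (eqVneq (kermx A) 0) => // /rowV0Pn [v /sub_kermxP vA v0]; exfalso.
have vJ : v *m sympJ n r = 0 by rewrite -h !mulmxA vA !mul0mx.
have [y] := om_nondeg n0 v0.
by rewrite om_mx vJ !mul0mx mxE eqxx.
Qed.

Lemma T0 n r : #|Tset n r 0| = 1%N.
Proof.
suff -> : Tset n r 0 = [set 0] by apply: cards1.
apply/setP => A; rewrite inTset inE.
have P0 (a : 'I_((2*n).-1.+1)) : Pj n 0 a = false.
  by rewrite /Pj ltn0 addn0 /=; case: leqP.
apply/andP/eqP.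
  case=> _ /forallP h; apply/row_matrixP => a; rewrite row0.
  by move: (h a); rewrite P0 => /eqP.
move=> ->; split.
  by apply/GoodP => a b; rewrite P0.
by apply/forallP => a; rewrite row0 eqxx implybT.
Qed.

Lemma Tn n r (n0 : (0 < n)%N) : Tset n r n = [set A | A *m sympJ n r *m A^T == sympJ n r].
Proof.
have P1 (a : 'I_((2*n).-1.+1)) : Pj n n a.
  rewrite /Pj; have := ltn_ord a; case: (ltnP a n) => //= h1 h2; lia.
apply/setP => A; rewrite inTset inE.
have -> : [forall a : 'I_((2*n).-1.+1), ~~ Pj n n a ==> (row a A == 0)].
  by apply/forallP => a; rewrite P1.
rewrite andbT; apply/GoodP/eqP.
  by move=> h; apply/matrixP => a b; rewrite mx_entry h.
by move=> h a b _ _; rewrite -mx_entry h.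
Qed.

Lemma card_Sp n r (n0 : (0 < n)%N) : #|Sp n r| = #|Tset n r n|.
Proof.
have inj : injective (fun g : {'GL_(2 * n)['F_r]} => GLval g) := val_inj.
rewrite Tn // -(card_imset _ inj); apply: eq_card => A.
apply/imsetP/idP.
  by case=> g; rewrite inE => h ->; rewrite inE.
rewrite inE => /eqP h.
have Au : A \is a GRing.unit by exact: (Sp_unit n0 h).
exists (Sub A Au : {'GL_(2 * n)['F_r]}); last by rewrite SubK.
by rewrite inE SubK h.
Qed.

End PartC.

Section PartD.

Lemma T_prod n r (n0 : (0 < n)%N) (pr : prime r) (odr : odd r) j : j <= n ->
  #|Tset n r j| = \prod_(0 <= i < j) ((r ^ (2 * n - 2 * i) - 1) * r ^ (2 * n - 2 * i).-1).
Proof.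
elim: j => [|j IH] jn; first by rewrite big_geq // T0.
by rewrite big_nat_recr //= T_rec // IH // ltnW.
Qed.

Lemma Omega_prod (s : seq nat) (F : nat -> nat) : (forall i, i \in s -> 0 < F i) ->
  Omega (\prod_(i <- s) F i) = \sum_(i <- s) Omega (F i).
Proof.
elim: s => [|a s IH] Fp; first by rewrite !big_nil Omega1.
rewrite !big_cons Omega_mul ?IH //.
- by move=> i Hs; apply: Fp; rewrite inE Hs orbT.
- by apply: Fp; rewrite inE eqxx.
by rewrite big_seq; apply: prodn_cond_gt0 => i Hs; apply: Fp; rewrite inE Hs orbT.
Qed.

Lemma dvd_pow_sub1 r a b : 0 < r -> r ^ a - 1 %| r ^ (a * b) - 1.
Proof.
move=> r0; elim: b => [|b IH]; first by rewrite muln0 expn0 subnn dvdn0.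
have X1 : 0 < r ^ a by rewrite expn_gt0 r0.
have Y1 : 0 < r ^ (a * b) by rewrite expn_gt0 r0.
have -> : r ^ (a * b.+1) - 1 = r ^ a * (r ^ (a * b) - 1) + (r ^ a - 1).
  rewrite mulnS expnD; move: X1 Y1; set X := r ^ a; set Y := r ^ (a * b); nia.
by rewrite dvdn_add // dvdn_mull.
Qed.

Lemma dvd_lcm_range n k : 0 < k <= n -> k %| \big[lcmn/1]_(1 <= i < n.+1) i.
Proof.
elim: n => [|n IH] kn; first by lia.
rewrite big_nat_recr //=.
case: (eqVneq k n.+1) => [->|kn']; first exact: dvdn_lcmr.
apply: dvdn_trans (dvdn_lcml _ _); apply: IH; lia.
Qed.

Lemma sum_odd n : \sum_(0 <= i < n) (2 * n - 2 * i).-1 = n ^ 2.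
Proof.
elim: n => [|n IH]; first by rewrite big_geq.
rewrite big_nat_recl //=.
rewrite (eq_big_nat _ _ (F2 := fun i => (2 * n - 2 * i).-1)); last first.
  by move=> i hi; congr (_.-1); lia.
rewrite IH; lia.
Qed.

Lemma lcm_range_gt0 n : 0 < \big[lcmn/1]_(1 <= i < n.+1) i.
Proof.
elim: n => [|n IH]; first by rewrite big_geq.
by rewrite big_nat_recr //= lcmn_gt0 IH.
Qed.

Lemma Omega_Sp n r M (n0 : 0 < n) (pr : prime r) (odr : odd r) :
  Omega (r ^ nbar n - 1) <= M -> Omega #|Sp n r| <= n ^ 2 + n * M.
Proof.
move=> hM.
have r1 : 1 < r := prime_gt1 pr.
have r0 : 0 < r := prime_gt0 pr.
rewrite card_Sp // T_prod // Omega_prod; last first.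
  move=> i; rewrite mem_index_iota => /andP [_ hi].
  rewrite muln_gt0 expn_gt0 r0 andbT subn_gt0.
  have -> : 2 * n - 2 * i = (2 * n - 2 * i).-1.+1 by lia.
  by rewrite expnS; apply: leq_trans r1 _; rewrite leq_pmulr // expn_gt0 r0.
apply: (@leq_trans (\sum_(0 <= i < n) ((2*n-2*i).-1 + M))); last first.
  by rewrite big_split /= sum_odd sum_nat_const_nat subn0.
rewrite big_nat [X in _ <= X]big_nat; apply: leq_sum => i /andP [_ hi].
rewrite Omega_mul ?Omega_primeX //; last first.
  - by rewrite expn_gt0 r0.
  - have -> : 2 * n - 2 * i = (2 * n - 2 * i).-1.+1 by lia.
    by rewrite subn_gt0 expnS; apply: leq_trans r1 _; rewrite leq_pmulr // expn_gt0 r0.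
rewrite addnC leq_add2l; apply: leq_trans hM.
apply: Omega_dvd.
  by rewrite subn_gt0 /nbar -{1}(expn0 r) ltn_exp2l // muln_gt0 lcm_range_gt0.
have [t ht] : exists t, nbar n = (2 * n - 2 * i) * t.
  have /dvdnP [t ht] := @dvd_lcm_range n (n - i) ltac:(lia).
  by exists t; rewrite /nbar ht; lia.
by rewrite ht dvd_pow_sub1.
Qed.

End PartD.

Lemma Sp_group_set n r : group_set (Sp n r).
Proof.
apply/group_setP; split.
  by rewrite inE GL_1E trmx1 mul1mx mulmx1.
move=> x y; rewrite !inE => /eqP hx /eqP hy.
have E : ((GLval x *m GLval y) *m sympJ n r *m (GLval x *m GLval y)^T =
   GLval x *m (GLval y *m sympJ n r *m (GLval y)^T) *m (GLval x)^T)%R.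
  by rewrite trmx_mul !mulmxA.
by rewrite GL_MxE E hy hx.
Qed.

Canonical SpG n r := Group (Sp_group_set n r).

Lemma c_dim_le_mono (gT : finGroupType) (G : {set gT}) B B' : c_dim_le G B -> (B <= B')%N -> c_dim_le G B'.
Proof. by move=> h le k Y ch; apply: leq_trans (h k Y ch) le. Qed.

Unset Implicit Arguments.
Theorem theorem3 (n M r p : nat) (gT : finGroupType)
    (G V X R A : {group gT}) :
  0 < n ->
  is_M_bar (nbar n) M ->
  r \in pi_set (nbar n) M ->
  (* R = R_{n,r}: extraspecial of order r^(2n+1) and exponent r *)
  extraspecial R -> #|R| = r ^ (2 * n + 1) -> exponent R = r ->
  (* X = R A, with A acting faithfully on R (A <= Aut R), A ~ Sp_{2n}(r),
     A centralizing Z(R) *)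
  (R ><| A = X)%g -> ('C_A(R) = 1)%g -> (A \subset 'C('Z(R)))%g ->
  A \isog Sp n r ->
  (* p prime, p = 1 mod r *)
  prime p -> p = 1 %[mod r] ->
  (* V: faithful irreducible F_p X-module of dimension r^n, G = V X *)
  (p.-abelem V)%g -> logn p #|V| = r ^ n ->
  (V ><| X = G)%g -> ('C_X(V) = 1)%g -> acts_irreducibly X V 'J%gact ->
  c_dim_le G (2 * ((n + 1) ^ 2 + n * M)).
Proof.
move=> n0 _ rpi _ cR _ sdRA _ _ isoA _ _ abV _ sdVX _ _.
move: rpi; rewrite /pi_set /= => /and3P [odr pr hM].
have [nVG _ _ _ _] := sdprod_context sdVX.
apply: c_dim_le_mono (chain_bound nVG (abelem_abelian abV)) _.
rewrite leq_mul2l /=.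
have cA : #|A| = #|Sp n r| := card_isog (H := SpG n r) isoA.
have cGV : #|G / V|%g = #|X|.
  rewrite card_quotient ?normal_norm //.
  by rewrite -divgS ?normal_sub // -(sdprod_card sdVX) mulKn ?cardG_gt0.
rewrite cGV -(sdprod_card sdRA) Omega_mul ?cardG_gt0 // cR Omega_primeX // cA.
have := Omega_Sp n0 pr odr hM.
lia.
Qed.
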